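(* For $p\in\mathbb{R}^d\setminus\{0\}$, the solution $u_p$ satisfies $$\max\{0,p\cdot x\}\le u_p(x)\le \max\{0,p\cdot x\}+\|p\|_\infty\quad\text{for all }x\in\mathbb{Z}^d,$$ and $\Delta u_p(x)\le \Delta u_p(0)\,\mathbf 1_{\{u_p=0\}}(x)$ for all $x\in\mathbb{Z}^d$.
   Context: Discrete Laplacian on $\mathbb{Z}^d$: $\Delta u(x)=\sum_{i=1}^d(u(x+e_i)+u(x-e_i)-2u(x))$. For $p\ne0$, $u_p:\mathbb{Z}^d\to\mathbb{R}$ is the unique solution of $\Delta u=0$ on $\{p\cdot x>0\}$, $u=0$ on $\{p\cdot x\le0\}$, $\sup_{p\cdot x>0}|u(x)-p\cdot x|<\infty$. $\|p\|_\infty=\max_k|p_k|$. *)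

(* Defs.v *)
From Stdlib Require Import Reals ZArith.
From mathcomp Require Import all_boot.
Set Implicit Arguments. Unset Strict Implicit.

Open Scope R_scope.

Definition pt (d : nat) := 'I_d -> Z.

Definition origin (d : nat) : pt d := fun _ => 0%Z.

Definition shift (d : nat) (x : pt d) (i : 'I_d) (k : Z) : pt d :=
  fun j => if j == i then (x j + k)%Z else x j.

Definition lap (d : nat) (u : pt d -> R) (x : pt d) : R :=
  \big[Rplus/0]_(i < d)
     (u (shift x i 1%Z) + u (shift x i (-1)%Z) - 2 * u x).

Definition dot (d : nat) (p : 'I_d -> R) (x : pt d) : R :=
  \big[Rplus/0]_(i < d) (p i * IZR (x i)).

Definition normInf (d : nat) (p : 'I_d -> R) : R :=
  \big[Rmax/0]_(i < d) Rabs (p i).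

Definition is_u_p (d : nat) (p : 'I_d -> R) (u : pt d -> R) : Prop :=
  (forall x, dot p x > 0 -> lap u x = 0) /\
  (forall x, dot p x <= 0 -> u x = 0) /\
  (exists C : R, forall x, dot p x > 0 -> Rabs (u x - dot p x) <= C).

Definition ind0 (d : nat) (u : pt d -> R) (x : pt d) : R :=
  if Req_EM_T (u x) 0 then 1 else 0.

(* Main.v *)
Require Import Defs.
From Stdlib Require Import Reals ZArith.
From mathcomp Require Import all_boot.
Open Scope R_scope.
From Stdlib Require Import Lra Lia FunctionalExtensionality Classical.
From HB Require Import structures.
Import Defs.
Set Implicit Arguments. Unset Strict Implicit.
HB.instance Definition _ := Monoid.isComLaw.Build R 0 Rplus (fun a b c => esym (Rplus_assoc a b c)) Rplus_comm Rplus_0_l.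

Lemma sumR_le (d : nat) (F G : 'I_d -> R) :
  (forall i, F i <= G i) -> \big[Rplus/0]_(i < d) F i <= \big[Rplus/0]_(i < d) G i.
Proof.
move=> H; apply: (big_ind2 (fun a b => a <= b)); [lra| |by move=> i _; apply: H].
by move=> *; apply: Rplus_le_compat.
Qed.

Lemma sumR_scal (d : nat) c (F : 'I_d -> R) :
  \big[Rplus/0]_(i < d) (c * F i) = c * \big[Rplus/0]_(i < d) F i.
Proof.
apply: (big_ind2 (fun a b => a = c * b)); [ring| |by []].
by move=> x1 x2 y1 y2 -> ->; ring.
Qed.

Lemma sumR_split (d : nat) (F G : 'I_d -> R) :
  \big[Rplus/0]_(i < d) (F i + G i) = \big[Rplus/0]_(i < d) F i + \big[Rplus/0]_(i < d) G i.
Proof. exact: big_split. Qed.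

Lemma sumR_const (d : nat) c :
  \big[Rplus/0]_(i < d) c = INR d * c.
Proof.
rewrite big_const_ord; elim: d => [|n IH]; first by simpl; ring.
rewrite iterS IH S_INR; ring.
Qed.

Lemma sumR_ge_term (d : nat) (F : 'I_d -> R) (i : 'I_d) :
  (forall j, 0 <= F j) -> F i <= \big[Rplus/0]_(j < d) F j.
Proof.
move=> H; rewrite (bigD1 i) //=.
set s := \big[_/_]_(_ < _ | _) _.
have : 0 <= s.
  apply: (big_ind (fun a => 0 <= a)); [lra| |by move=> j _; apply: H].
  by move=> *; lra.
lra.
Qed.

Lemma maxR_ge (d : nat) (F : 'I_d -> R) (i : 'I_d) :
  F i <= \big[Rmax/0]_(j < d) F j.
Proof.
have : i \in index_enum 'I_d by apply: mem_index_enum.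
elim: (index_enum 'I_d) => [|a r IH] //=.
rewrite inE big_cons /= => /orP [/eqP ->|/IH h].
- apply: Rmax_l.
- apply: Rle_trans h (Rmax_r _ _).
Qed.

Lemma maxR_ge0 (d : nat) (F : 'I_d -> R) : 0 <= \big[Rmax/0]_(j < d) F j.
Proof.
apply: (big_rec (fun a => 0 <= a)); first lra.
move=> i x _ h; apply: Rle_trans h (Rmax_r _ _).
Qed.
Lemma dot_shift (d : nat) (p : 'I_d -> R) x i k :
  dot p (shift x i k) = dot p x + p i * IZR k.
Proof.
rewrite /dot (bigD1 i) //= [in RHS](bigD1 i) //=.
have -> : \big[Rplus/0]_(j < d | j != i) (p j * IZR (shift x i k j)) =
          \big[Rplus/0]_(j < d | j != i) (p j * IZR (x j)).
  apply: eq_bigr => j /negbTE hj; by rewrite /shift hj.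
rewrite /shift eqxx plus_IZR. rewrite Rmult_plus_distr_l Rplus_assoc (Rplus_comm (p i * IZR k)) -Rplus_assoc; reflexivity.
Qed.

Definition padd (d : nat) (z y : pt d) : pt d := fun j => (z j + y j)%Z.

Lemma dot_add (d : nat) (p : 'I_d -> R) z y :
  dot p (padd z y) = dot p z + dot p y.
Proof.
rewrite /dot -sumR_split; apply: eq_bigr => j _.
rewrite /padd plus_IZR; ring.
Qed.

Lemma dot_origin (d : nat) (p : 'I_d -> R) : dot p (@origin d) = 0.
Proof.
rewrite /dot; apply: big1 => j _; rewrite /origin; ring.
Qed.

Lemma shift_add (d : nat) (z y : pt d) i k :
  shift (padd z y) i k = padd z (shift y i k).
Proof.
apply: functional_extensionality => j; rewrite /shift /padd.
case: (j == i); lia.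
Qed.

Lemma shift_origin (d : nat) (x : pt d) i k :
  shift x i k = padd x (shift (@origin d) i k).
Proof.
apply: functional_extensionality => j; rewrite /shift /padd /origin.
case: (j == i); lia.
Qed.

Lemma lap_translate (d : nat) (u : pt d -> R) z y :
  lap (fun w => u (padd z w)) y = lap u (padd z y).
Proof.
rewrite /lap; apply: eq_bigr => i _; by rewrite !shift_add.
Qed.

Lemma lap_sub (d : nat) (f g : pt d -> R) y :
  lap (fun w => f w - g w) y = lap f y - lap g y.
Proof.
have -> : lap f y - lap g y = lap f y + (-1) * lap g y by ring.
rewrite /lap -sumR_scal -sumR_split; apply: eq_bigr => i _; ring.
Qed.

Lemma lap_const (d : nat) (f : pt d -> R) c y :
  lap (fun w => f w + c) y = lap f y.
Proof. rewrite /lap; apply: eq_bigr => i _; ring. Qed.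

Lemma lap_dot (d : nat) (p : 'I_d -> R) y : lap (dot p) y = 0.
Proof.
rewrite /lap; apply: big1 => i _; rewrite !dot_shift; ring.
Qed.

Lemma INR_pos_of (d : nat) (i : 'I_d) : 0 < INR d.
Proof. apply: lt_0_INR; apply/ltP; exact: (leq_ltn_trans (leq0n i) (ltn_ord i)). Qed.

Definition nb (k : Z) := (k = 1 \/ k = -1)%Z.

Lemma propag (d : nat) (f : pt d -> R) y (S e : R) :
  0 <= lap f y -> f y <= S ->
  (forall i k, nb k -> f (shift y i k) <= S) ->
  f y > S - e ->
  forall i k, nb k -> f (shift y i k) > S - 2 * INR d * e.
Proof.
move=> hl hy hn hye i k hk.
have hd := INR_pos_of i.
set e' := S - f y.
pose a j := f (shift y j 1) - f y.
pose b j := f (shift y j (-1)) - f y.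
have ha : forall j, a j <= e' by move=> j; have := hn j 1%Z (or_introl erefl); rewrite /a /e'; lra.
have hb : forall j, b j <= e' by move=> j; have := hn j (-1)%Z (or_intror erefl); rewrite /b /e'; lra.
have hsum : \big[Rplus/0]_(j < d) (2 * e' - (a j + b j)) <= INR d * (2 * e').
  have -> : \big[Rplus/0]_(j < d) (2 * e' - (a j + b j)) =
     \big[Rplus/0]_(j < d) (2 * e') + (-1) * lap f y.
    rewrite -sumR_scal -sumR_split /lap; apply: eq_bigr => j _; rewrite /a /b; ring.
  rewrite sumR_const; lra.
have hi := @sumR_ge_term d (fun j => 2 * e' - (a j + b j)) i.
have : 2 * e' - (a i + b i) <= INR d * (2 * e').
  apply: Rle_trans hsum; apply: hi => j; have := ha j; have := hb j; lra.
move=> h.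
have he' : e' < e by rewrite /e'; lra.
have he0 : 0 <= e' by rewrite /e'; lra.
have hde : INR d * e' < INR d * e by apply: Rmult_lt_compat_l.
case: hk => ->.
- have := hb i; rewrite /a /b /e' in h hde he0 he' *; nra.
- have := ha i; rewrite /a /b /e' in h hde he0 he' *; nra.
Qed.
Lemma nat_above r : exists n : nat, r < INR n.
Proof.
case: (Rlt_or_le r 0) => hr; first by exists 0%N; simpl; lra.
have [h1 _] := archimed r.
have hz : (0 <= up r)%Z by apply: le_IZR; lra.
exists (Z.to_nat (up r)); rewrite INR_IZR_INZ Z2Nat.id //.
Qed.

Lemma sqrt_concave s a : 0 < s + a -> 0 < s - a ->
  sqrt (s + a) + sqrt (s - a) <= 2 * sqrt s.
Proof.
move=> h1 h2.
have e1 := sqrt_sqrt (s + a) (Rlt_le _ _ h1).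
have e2 := sqrt_sqrt (s - a) (Rlt_le _ _ h2).
have e3 := sqrt_sqrt s (ltac:(lra) : 0 <= s).
have p1 := sqrt_pos (s + a). have p2 := sqrt_pos (s - a). have p3 := sqrt_pos s.
set A := sqrt (s + a) in e1 p1 *. set Bb := sqrt (s - a) in e2 p2 *. set C := sqrt s in e3 p3 *.
have hsq : 0 <= (A - Bb) * (A - Bb) by apply: Rle_0_sqr.
have : (A + Bb) * (A + Bb) <= (2 * C) * (2 * C) by nra.
nra.
Qed.

Lemma abs_le_norm (d : nat) (p : 'I_d -> R) i : Rabs (p i) <= normInf p.
Proof. rewrite /normInf; exact: (@maxR_ge d (fun j => Rabs (p j)) i). Qed.

Lemma Rpow_ge1 r n : 1 <= r -> 1 <= r ^ n.
Proof. move=> h; elim: n => [|n IH] /=; nra. Qed.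

Lemma Rpow_mono r n m : 1 <= r -> (n <= m)%N -> r ^ n <= r ^ m.
Proof.
move=> h /leP; elim => [|m' _ IH]; first lra.
simpl; have := Rpow_ge1 m' h; nra.
Qed.

Section MP.
Variables (d : nat) (p : 'I_d -> R) (c : R) (f : pt d -> R) (B : R) (i0 : 'I_d).
Hypothesis hp0 : p i0 <> 0.
Hypothesis hB : forall x, dot p x > c -> f x <= B.
Hypothesis hlap : forall x, dot p x > c -> 0 <= lap f x.
Hypothesis hbd : forall x i k, dot p x > c -> nb k -> dot p (shift x i k) <= c ->
  f (shift x i k) <= 0.

Let N := normInf p.
Let F (t : R) := sqrt (t - c + N + 1).

Lemma dot_nb x i k : nb k -> dot p (shift x i k) >= dot p x - N.
Proof.
move=> hk; rewrite dot_shift; have := abs_le_norm p i; rewrite -/N.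
case: hk => ->; rewrite /=; split_Rabs; lra.
Qed.

Lemma lapF_le x : dot p x > c -> lap (fun w => F (dot p w)) x <= 0.
Proof.
move=> hx; rewrite /lap.
apply: Rle_trans (_ : \big[Rplus/0]_(i < d) 0 <= 0); last by rewrite sumR_const; lra.
apply: sumR_le => i; rewrite !dot_shift /F.
have := abs_le_norm p i; rewrite -/N => hn.
have hN : 0 <= N by apply: Rle_trans (Rabs_pos _) hn.
have := @sqrt_concave (dot p x - c + N + 1) (p i) ltac:(split_Rabs; lra) ltac:(split_Rabs; lra).
have -> : dot p x + p i * IZR 1 - c + N + 1 = dot p x - c + N + 1 + p i by simpl; ring.
have -> : dot p x + p i * IZR (-1) - c + N + 1 = dot p x - c + N + 1 - p i by simpl; ring.
lra.
Qed.

Theorem max_principle x0 : dot p x0 > c -> f x0 <= 0.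
Proof.
move=> hx0; apply: Rnot_lt_le => ha.
set a := f x0 in ha.
have hF0 : forall t, 0 <= F t by move=> t; apply: sqrt_pos.
set eps := a / (2 * (F (dot p x0) + 1)).
have heps : 0 < eps.
  rewrite /eps; apply: Rdiv_lt_0_compat; have := hF0 (dot p x0); lra.
have hepsF : eps * F (dot p x0) < a / 2.
  rewrite /eps; have := hF0 (dot p x0) => h0.
  apply: (Rmult_lt_reg_r (2 * (F (dot p x0) + 1))); first lra.
  field_simplify; [nra | lra].
pose g w := f w - eps * F (dot p w).
have hg_le_f : forall w, g w <= f w by move=> w; rewrite /g; have := hF0 (dot p w); nra.
have hglap : forall x, dot p x > c -> 0 <= lap g x.
  move=> x hx.
  have -> : lap g x = lap f x + (- eps) * lap (fun w => F (dot p w)) x.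
    rewrite /g lap_sub.
    have -> : lap (fun w => eps * F (dot p w)) x = eps * lap (fun w => F (dot p w)) x.
      rewrite /lap -sumR_scal; apply: eq_bigr => i _; ring.
    ring.
  have := hlap hx; have := lapF_le hx; nra.
pose E r := exists y, dot p y > c /\ r = g y.
have hEb : bound E.
  by exists B => r [y [hy ->]]; apply: Rle_trans (hg_le_f y) (hB hy).
have hEne : exists r, E r by exists (g x0), x0.
have [S [hSub hSl]] := @completeness E hEb hEne.
have hS : forall y, dot p y > c -> g y <= S by move=> y hy; apply: hSub; exists y.
have hgx0 : g x0 > a / 2 by rewrite /g -/a; lra.
have hSpos : S > a / 2 by have := hS x0 hx0; lra.
set R0 := (B - S / 2) / eps.
have hfar : forall y, dot p y > c -> g y > S / 2 -> dot p y < c + R0 * R0.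
  move=> y hy hgy.
  have hfy := hB hy.
  have hFy : F (dot p y) < R0.
    rewrite /R0; apply: (Rmult_lt_reg_r eps) => //.
    field_simplify; last lra. rewrite /g in hgy; lra.
  have hN : 0 <= N by apply: maxR_ge0.
  have e := sqrt_sqrt (dot p y - c + N + 1) ltac:(lra).
  rewrite -/(F (dot p y)) in e.
  have := hF0 (dot p y); nra.
set q := Rabs (p i0).
have hq : 0 < q by apply: Rabs_pos_lt.
have [K hK] := nat_above (R0 * R0 / q).
set r := 2 * INR d.
have hd1 : 1 <= INR d.
  have : (1 <= d)%N by exact: (leq_ltn_trans (leq0n i0) (ltn_ord i0)).
  by move/leP => h; apply: (le_INR 1).
have hr : 1 <= r by rewrite /r; lra.
set delta := (S / 2) / r ^ K.
have hrK : 1 <= r ^ K by apply: Rpow_ge1.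
have hdelta : 0 < delta by rewrite /delta; apply: Rdiv_lt_0_compat; lra.
have hdK : r ^ K * delta = S / 2 by rewrite /delta; field; lra.
have [y [hy hgy]] : exists y, dot p y > c /\ g y > S - delta.
  apply: NNPP => hno; have : is_upper_bound E (S - delta).
    move=> t [y [hy ->]]; apply: Rnot_lt_le => hlt; apply: hno; exists y; split => //; lra.
  move/hSl; lra.
have [s [hs hps]] : exists s, nb s /\ p i0 * IZR s = - q.
  rewrite /q; case: (Rlt_dec 0 (p i0)) => h.
  - exists (-1)%Z; split; [by right|]; rewrite /=; split_Rabs; lra.
  - exists 1%Z; split; [by left|]; rewrite /=; split_Rabs; lra.
pose st w := shift w i0 s.
have hdot : forall k, dot p (iter k st y) = dot p y - INR k * q.
  elim => [|k IH]; first by simpl; ring.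
  rewrite iterS /st dot_shift -/(st _) IH hps S_INR; ring.
have claim : forall k, (k <= K)%N -> dot p (iter k st y) > c /\ g (iter k st y) > S - r ^ k * delta.
  elim => [|k IH] hk; first by simpl; split => //; lra.
  have [hin hgk] := IH (ltnW hk).
  have hnbS : forall i k', nb k' -> g (shift (iter k st y) i k') <= S.
    move=> i k' hk'; case: (Rle_or_lt (dot p (shift (iter k st y) i k')) c) => hc.
    - have := hbd hin hk' hc; have := hg_le_f (shift (iter k st y) i k'); lra.
    - exact: hS.
  have hpr := propag (hglap _ hin) (hS _ hin) hnbS hgk i0 hs.
  have hmono : r ^ k.+1 * delta <= S / 2.
    rewrite -hdK; apply: Rmult_le_compat_r; first lra. exact: Rpow_mono.
  have hgk1 : g (iter k.+1 st y) > S - r ^ k.+1 * delta.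
    have -> : r ^ k.+1 = r * r ^ k by [].
    change (g (shift (iter k st y) i0 s) > S - r * r ^ k * delta); rewrite Rmult_assoc; exact hpr.
  split => //.
  apply: Rnot_le_lt => hc.
  have := hbd hin hs (ltac:(rewrite -/(st _) -iterS; exact hc) : dot p (shift (iter k st y) i0 s) <= c).
  rewrite -/(st _) -iterS; have := hg_le_f (iter k.+1 st y); lra.
have [hinK _] := claim K (leqnn K).
have hyT : dot p y < c + R0 * R0 by apply: hfar => //; nra.
rewrite hdot in hinK.
have : R0 * R0 < INR K * q.
  have := hK; move=> hK'; apply (Rmult_lt_compat_r q) in hK' => //.
  by rewrite /Rdiv Rmult_assoc Rinv_l ?Rmult_1_r in hK'; lra.
lra.
Qed.
End MP.
Unset Implicit Arguments.
Theorem mainTheorem5 (d : nat) (p : 'I_d -> R) (hp : exists i, p i <> 0)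
  (u : pt d -> R) (hu : is_u_p p u) :
  (forall x : pt d,
     Rmax 0 (dot p x) <= u x <= Rmax 0 (dot p x) + normInf p) /\
  (forall x : pt d, lap u x <= lap u (@origin d) * ind0 u x).
Proof.
case: hp => i0 hi0.
case: hu => [harm [hzero [C hC]]].
have hN : 0 <= normInf p by apply: maxR_ge0.
have hCb : forall x, dot p x > 0 -> dot p x - C <= u x <= dot p x + C.
  by move=> x hx; have := hC x hx; split_Rabs; lra.
have low : forall x, dot p x > 0 -> dot p x <= u x.
  move=> x hx.
  suff : (fun w => dot p w - u w) x <= 0 by simpl; lra.
  apply: (@max_principle d p 0 (fun w => dot p w - u w) C i0 hi0) => //.
  - by move=> y hy; have := hCb y hy; lra.
  - by move=> y hy; rewrite lap_sub lap_dot harm //; lra.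
  - by move=> y i k hy hk hc; rewrite hzero //; lra.
have up : forall x, dot p x > 0 -> u x <= dot p x + normInf p.
  move=> x hx.
  suff : (fun w => (u w - dot p w) + - normInf p) x <= 0 by simpl; lra.
  apply: (@max_principle d p 0 (fun w => (u w - dot p w) + - normInf p) C i0 hi0) => //.
  - by move=> y hy; have := hCb y hy; lra.
  - by move=> y hy; rewrite lap_const lap_sub lap_dot harm //; lra.
  - move=> y i k hy hk hc; rewrite hzero //.
    have := dot_nb p y i hk; lra.
have u0 : forall x, 0 <= u x.
  move=> x; case: (Rle_or_lt (dot p x) 0) => hx; first by rewrite hzero //; lra.
  by have := low x hx; lra.
have mono : forall z y, dot p z <= 0 -> u (padd z y) <= u y.
  move=> z y hz.
  case: (Rle_or_lt (dot p y) (- dot p z)) => hy.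
    by rewrite hzero ?dot_add; [apply: u0 | lra].
  suff : (fun w => u (padd z w) - u w) y <= 0 by simpl; lra.
  apply: (@max_principle d p (- dot p z) (fun w => u (padd z w) - u w) (dot p z + 2 * C) i0 hi0) => //.
  - move=> w hw; have h1 := hCb w ltac:(lra).
    have h2 := hCb (padd z w) ltac:(rewrite dot_add; lra).
    rewrite dot_add in h2; lra.
  - move=> w hw; rewrite lap_sub lap_translate !harm ?dot_add; lra.
  - move=> w i k hw hk hc; rewrite hzero ?dot_add; last lra.
    have := u0 (shift w i k); lra.
split.
- move=> x; case: (Rle_or_lt (dot p x) 0) => hx.
  + rewrite hzero // Rmax_left //; lra.
  + rewrite Rmax_right; last lra.
    by split; [apply: low | apply: up].
- move=> x; case: (Rle_or_lt (dot p x) 0) => hx.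
  + have -> : ind0 u x = 1 by rewrite /ind0; case: Req_EM_T => // h; exfalso; apply: h; exact: hzero.
    rewrite Rmult_1_r /lap; apply: sumR_le => i.
    rewrite (hzero x hx) (hzero (@origin d)) ?dot_origin; last lra.
    rewrite (shift_origin x i 1) (shift_origin x i (-1)).
    have := mono x (shift (@origin d) i 1) hx.
    have := mono x (shift (@origin d) i (-1)) hx.
    lra.
  + rewrite harm //.
    have hux := low x hx.
    have -> : ind0 u x = 0 by rewrite /ind0; case: Req_EM_T => // h; lra.
    lra.
Qed.
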